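(* Let $g(z)=z^3-z^2+7z+1$, $A=\{z\in\mathbb{C}:\Re z\le0,\ |g(z)|=1\}$ and $B=\{z\in\mathbb{C}:\Re z>0,\ |g(z)|=1\}$. Then $A\subset D(0,0.275)$ and $B\subset D(0,2.75)$, where $D(0,r)$ is the open disc of radius $r$ centered at $0$. *)

(* Defs.v *)
From Stdlib Require Import Reals.
From Coquelicot Require Export Coquelicot.
Open Scope R_scope.
Open Scope C_scope.

Definition g (z : C) : C := z * z * z - z * z + RtoC 7 * z + RtoC 1.

Definition Disc0 (r : R) : C -> Prop := fun z => (Cmod z < r)%R.

Definition setA : C -> Prop := fun z => (Re z <= 0)%R /\ Cmod (g z) = 1%R.
Definition setB : C -> Prop := fun z => (0 < Re z)%R /\ Cmod (g z) = 1%R.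

(* Main.v *)
Require Import Defs.
From Stdlib Require Import Reals Lra Psatz.
From Coquelicot Require Import Coquelicot.

Lemma g_xy x y : g (x,y) = (x*x*x - 3*x*y*y - x*x + y*y + 7*x + 1, 3*x*x*y - y*y*y - 2*x*y + 7*y)%R.
Proof. unfold g, Cminus, Cmult, Cplus, Copp, RtoC; simpl. f_equal; ring. Qed.

Definition FF x y := let s := (x*x+y*y)%R in
  (s*s*s - 13*s*s + 51*s + 14*x - 4*x*x + 8*x*x*x - 20*s*x + 28*s*x*x - 2*s*s*x)%R.

Lemma F_eq x y : Cmod (g (x,y)) = 1%R -> FF x y = 0%R.
Proof.
  rewrite g_xy. unfold Cmod; simpl. intro H.
  assert (H2 := f_equal (fun u => u*u)%R H). simpl in H2.
  rewrite sqrt_sqrt in H2. 2: (apply Rplus_le_le_0_compat; apply pow2_ge_0).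
  unfold FF. nra.
Qed.
Lemma partA (t s r : R) : 0 <= t -> 0 <= r -> r*r = s -> t <= r -> 275/1000 <= r ->
  s*s*s - 13*s*s + 51*s + t*(-14 + 20*s + 2*s*s) + t*t*(-4+28*s) - 8*t*t*t > 0.
Proof.
  intros Ht Hr Hs Htr Hr0.
  assert (Htt : t*t <= s) by nra.
  assert (H3 : -8*t*t*t >= -8*t*s) by nra.
  destruct (Rle_lt_dec (1/7) s) as [Hs7|Hs7].
  - assert (t*t*(-4+28*s) >= 0) by nra.
    destruct (Rle_lt_dec 0 (-14+12*s+2*s*s)) as [Hc|Hc].
    + assert (t*(-14+12*s+2*s*s) >= 0) by nra.
      assert (s*s*s - 13*s*s + 51*s > 0).
      { replace (s*s*s - 13*s*s + 51*s) with (s*((s-13/2)*(s-13/2)+35/4)) by field.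
        apply Rmult_gt_0_compat. lra. pose proof (Rle_0_sqr (s-13/2)). unfold Rsqr in *. lra. }
      nra.
    + assert ((r-t)*(-(-14+12*s+2*s*s)) >= 0) by (apply Rle_ge, Rmult_le_pos; lra).
      assert (t*(-14+12*s+2*s*s) >= r*(-14+12*s+2*s*s)) by lra.
      assert (s < 1).
      { destruct (Rlt_le_dec s 1) as [?|Hq]; auto. assert (s*s >= 1) by nra. lra. }
      assert (r <= 1).
      { destruct (Rle_lt_dec r 1) as [?|Hq]; auto. assert (r*r > 1) by nra. lra. }
      assert (r*r*r <= r*r) by (assert ((1-r)*(r*r) >= 0) by (apply Rle_ge, Rmult_le_pos; nra); lra).
      assert (r*r <= r) by (assert ((1-r)*r >= 0) by (apply Rle_ge, Rmult_le_pos; nra); lra).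
      assert (r*(r*r*r*r*r + 2*r*r*r*r -13*r*r*r + 12*r*r + 51*r - 14) > 0).
      { apply Rmult_gt_0_compat. lra. assert (0 <= r*r*r*r*r) by (repeat apply Rmult_le_pos; lra).
        assert (0 <= r*r*r*r) by (repeat apply Rmult_le_pos; lra). nra. }
      subst s. nra.
  - assert (t*t*(-4+28*s) >= s*(-4+28*s)) by nra.
    assert (t*(-14+12*s+2*s*s) >= r*(-14+12*s+2*s*s)) by nra.
    assert (r*r >= (275/1000)*(275/1000)) by nra.
    assert (r*r*r >= (275/1000)*(275/1000)*(275/1000)) by nra.
    assert (r*(r*r*r*r*r + 2*r*r*r*r +15*r*r*r + 12*r*r + 47*r - 14) > 0).
    { apply Rmult_gt_0_compat. lra. assert (0 <= r*r*r*r*r) by (repeat apply Rmult_le_pos; lra).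
      assert (0 <= r*r*r*r) by (repeat apply Rmult_le_pos; lra). nra. }
    subst s. nra.
Qed.
Lemma partB (x s : R) : 0 < x -> 121/16 <= s ->
  s*s*s - (13+2*x)*s*s + (51 - 20*x + 28*x*x)*s + (8*x*x*x - 4*x*x + 14*x) > 0.
Proof.
  intros Hx Hs.
  destruct (Rle_lt_dec 1 x) as [H1|H1].
  - assert (27*x*x - 33*x + 35/4 > 0) by nra.
    assert (8*x*x*x - 4*x*x + 14*x > 0).
    { assert (x*x*x >= x*x) by nra. lra. }
    assert (s*((s - (2*x+13)/2)*(s - (2*x+13)/2) + 27*x*x - 33*x + 35/4) > 0).
    { apply Rmult_gt_0_compat. lra. pose proof (Rle_0_sqr (s - (2*x+13)/2)). unfold Rsqr in *. lra. }
    assert (E : s*s*s - (13+2*x)*s*s + (51 - 20*x + 28*x*x)*s + (8*x*x*x - 4*x*x + 14*x)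
       = s*((s - (2*x+13)/2)*(s - (2*x+13)/2) + 27*x*x - 33*x + 35/4) + (8*x*x*x - 4*x*x + 14*x)) by field.
    rewrite E. lra.
  - set (v := s - 121/16).
    assert (Hv : 0 <= v) by (unfold v; lra).
    assert (E : s*s*s - (13+2*x)*s*s + (51 - 20*x + 28*x*x)*s + (8*x*x*x - 4*x*x + 14*x)
       = v*v*v + (3*(121/16) - 13 - 2*x)*v*v
         + (28*(x - 201/224)*(x - 201/224) + (6643/256 - (201/4)*(201/4)/112))*v
         + ((x - 117/200)*(x - 117/200)*(8*x + (831/4 + 16*(117/200)))
            + (-32209/128 - 8*(117/200)*(117/200) + 2*(117/200)*(831/4 + 16*(117/200)))*x
            + (306009/4096 - (117/200)*(117/200)*(831/4 + 16*(117/200))))).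
    { unfold v. field. }
    rewrite E.
    assert (0 <= v*v*v) by (repeat apply Rmult_le_pos; lra).
    assert (0 <= (3*(121/16) - 13 - 2*x)*v*v) by (repeat apply Rmult_le_pos; lra).
    assert (0 <= (28*(x - 201/224)*(x - 201/224) + (6643/256 - (201/4)*(201/4)/112))*v).
    { apply Rmult_le_pos; [|lra]. pose proof (Rle_0_sqr (x - 201/224)). unfold Rsqr in *. lra. }
    assert (0 <= (x - 117/200)*(x - 117/200)*(8*x + (831/4 + 16*(117/200)))).
    { apply Rmult_le_pos; [|lra]. pose proof (Rle_0_sqr (x - 117/200)). unfold Rsqr in *. lra. }
    lra.
Qed.

Lemma Cmod_sq x y : Cmod (x,y) * Cmod (x,y) = (x*x+y*y)%R.
Proof. unfold Cmod; simpl. rewrite sqrt_sqrt. ring. apply Rplus_le_le_0_compat; apply pow2_ge_0. Qed.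

Theorem proposition3p7 :
  (forall z : C, setA z -> Disc0 (275 / 1000)%R z) /\
  (forall z : C, setB z -> Disc0 (275 / 100)%R z).
Proof.
  split; intros [x y] [Hre Hg]; simpl in Hre; apply F_eq in Hg; unfold Disc0, FF in *;
    pose proof (Cmod_sq x y) as Hsq; pose proof (Cmod_ge_0 (x,y)) as Hr0;
    set (r := Cmod (x,y)) in *; set (s := (x*x+y*y)%R) in *.
  - destruct (Rlt_le_dec r (275/1000)%R) as [?|Hr]; auto. exfalso. assert (Ht : (0 <= -x)%R) by lra.
    assert (Htr : (-x <= r)%R).
    { destruct (Rle_lt_dec (-x) r) as [?|Hq]; auto. assert (x*x > r*r)%R by nra. unfold s in Hsq. nra. }
    pose proof (partA (-x) s r Ht Hr0 Hsq Htr Hr). lra.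
  - destruct (Rlt_le_dec r (275/100)%R) as [?|Hr]; auto. exfalso.
    assert (Hs : (121/16 <= s)%R) by nra.
    pose proof (partB x s Hre Hs). lra.
Qed.
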